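(* Let $g>0$ and $n\ge 2$ be an integer, and put $N=n!$. For $x\in(0,1]$ let $\alpha_0(x)\in(0,\pi]$ be defined by $$\cos\Big(\frac{\alpha_0(x)}{2}\Big)=\frac{1-x}{\sqrt{1-2x+2x^2}},$$ and let $T(x)=\frac{2}{g}\ln\Big(\cot\frac{\alpha_0(x)}{4}\Big)$. Then for every integer $s$ with $1\le s\le N$, $$\sum_{i=0}^{\lfloor \log_2 s\rfloor} T\Big(\frac{\lfloor s/2^i\rfloor}{N}\Big)\;\le\;\frac{2}{g}\,\log(2s)\,\Big(\log_2\frac{N}{\sqrt{s}}+1\Big).$$
   Context: $\ln$ and $\log$ denote the natural logarithm and $\log_2$ the base-2 logarithm. $T(x)$ is the nonlinear (Gross–Pitaevskii) evolution time needed to make the single-qubit states $\frac{(N-t)|0\rangle+t|1\rangle}{\sqrt{N^2-2Nt+2t^2}}$ with $t=0$ and $t=xN$ orthogonal. *)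

(* Defs.v *)
From Stdlib Require Import Reals Arith Factorial.
Open Scope R_scope.

(* alpha0(x) in (0,pi]: the unique angle with cos(alpha0/2) = (1-x)/sqrt(1-2x+2x^2);
   since alpha0/2 lies in [0,pi], alpha0/2 = acos of that ratio. *)
Definition alpha0 (x : R) : R :=
  2 * acos ((1 - x) / sqrt (1 - 2 * x + 2 * x ^ 2)).

Definition cot (t : R) : R := cos t / sin t.

Definition T (g x : R) : R := (2 / g) * ln (cot (alpha0 x / 4)).

Definition log2R (y : R) : R := ln y / ln 2.

(* Main.v *)
Require Import Defs.
From Stdlib Require Import Reals Arith Factorial.
From Stdlib Require Import Lra Lia Psatz.
Open Scope R_scope.

Lemma my_div_le0 a b : 0 <= a -> 0 < b -> 0 <= a / b.
Proof. intros; unfold Rdiv; apply Rmult_le_pos; [lra|left; apply Rinv_0_lt_compat; lra]. Qed.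

Lemma my_ln_le a b : 0 < a -> a <= b -> ln a <= ln b.
Proof. intros Ha Hab. destruct (Rle_lt_or_eq_dec _ _ Hab) as [H|H].
  - left; apply ln_increasing; auto.
  - subst; lra. Qed.

Lemma cot_bound x : 0 < x <= 1 -> 0 < cot (alpha0 x / 4) <= 2 / x.
Proof.
  intros [Hx0 Hx1].
  set (D := 1 - 2 * x + 2 * x ^ 2).
  assert (HD : 0 < D) by (unfold D; nra).
  set (q := sqrt D).
  assert (Hq : 0 < q) by (apply sqrt_lt_R0; auto).
  assert (Hqq : q * q = D) by (apply sqrt_sqrt; lra).
  set (c := (1 - x) / q).
  assert (Hc0 : 0 <= c) by (unfold c; apply my_div_le0; lra).
  assert (Hc1 : c <= 1).
  { unfold c. apply Rmult_le_reg_r with q; auto. field_simplify; try lra.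
    assert (1 - x <= q) by (apply Rsqr_incr_0_var; unfold Rsqr; unfold D in Hqq; nra). lra. }
  set (th := acos c).
  assert (Hcos : cos th = c) by (apply cos_acos; lra).
  assert (Hsin : sin th = x / q).
  { unfold th. rewrite sin_acos by lra. apply sqrt_lem_1.
    - unfold Rsqr, c. apply Rge_le, Rge_minus, Rle_ge. 
      assert ((1-x)/q * ((1-x)/q) = (1-x)*(1-x)/D) by (rewrite <- Hqq; field; lra).
      rewrite H. apply Rmult_le_reg_r with D; auto. field_simplify; unfold D; nra.
    - apply my_div_le0; lra.
    - unfold Rsqr, c. apply Rmult_eq_reg_r with (q*q); [|nra].
      replace (x / q * (x / q) * (q * q)) with (x*x) by (field; lra).
      replace ((1 - (1 - x) / q * ((1 - x) / q)) * (q * q)) with (q*q - (1-x)*(1-x)) by (field; lra).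
      rewrite Hqq; unfold D; ring. }
  assert (Hth := acos_bound c). fold th in Hth.
  assert (Hsinpos : 0 < sin th) by (rewrite Hsin; apply Rdiv_lt_0_compat; lra).
  assert (Hth0 : 0 < th).
  { destruct (Rle_lt_or_eq_dec 0 th) as [H|H]; [lra|auto|]. rewrite <- H in Hsinpos. rewrite sin_0 in Hsinpos. lra. }
  assert (HthP : th < PI).
  { destruct (Rle_lt_or_eq_dec th PI) as [H|H]; [lra|auto|]. rewrite H in Hsinpos. rewrite sin_PI in Hsinpos. lra. }
  assert (Ha : alpha0 x / 4 = th / 2) by (unfold alpha0, th, c, q, D; field).
  rewrite Ha.
  assert (Hs2 : 0 < sin (th/2)) by (apply sin_gt_0; lra).
  assert (Hc2 : 0 < cos (th/2)) by (apply cos_gt_0; lra).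
  assert (E1 : sin th = 2 * sin (th/2) * cos (th/2)) by (rewrite <- sin_2a; f_equal; field).
  assert (E2 : cos th = 2 * cos (th/2) * cos (th/2) - 1) by (rewrite <- cos_2a_cos; f_equal; field).
  unfold cot. split. apply Rdiv_lt_0_compat; auto.
  assert (Hqb : q <= 1 + x).
  { apply Rsqr_incr_0_var; unfold Rsqr; try lra. rewrite Hqq. unfold D. nra. }
  assert (K : cos (th/2) / sin (th/2) = (1 + c) / sin th).
  { rewrite E1. field_simplify; try lra. rewrite <- Hcos, E2. field. lra. }
  rewrite K, Hsin. unfold c. apply Rmult_le_reg_r with (x / q). apply Rdiv_lt_0_compat; lra.
  field_simplify; try lra. apply Rmult_le_reg_r with q; auto. field_simplify; lra.
Qed.

Lemma sum_lin (a b : R) (M : nat) :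
  sum_f_R0 (fun i => a + b * INR i) M = (INR M + 1) * a + b * INR M * (INR M + 1) / 2.
Proof.
  induction M as [|M IH].
  - simpl. field.
  - cbn [sum_f_R0]. rewrite IH, S_INR. field.
Qed.

Lemma sum_scal (c : R) (f : nat -> R) (M : nat) :
  sum_f_R0 (fun i => c * f i) M = c * sum_f_R0 f M.
Proof. induction M as [|M IH]; [simpl; ring| cbn [sum_f_R0]; rewrite IH; ring]. Qed.

Lemma ln2_pos : 0 < ln 2.
Proof. rewrite <- ln_1. apply ln_increasing; lra. Qed.

Theorem lemma1 (g : R) (n : nat) (hg : 0 < g) (hn : (2 <= n)%nat)
  (s : nat) (hs1 : (1 <= s)%nat) (hs2 : (s <= fact n)%nat) :
  sum_f_R0 (fun i => T g (INR (s / 2 ^ i) / INR (fact n))) (Nat.log2 s)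
  <= (2 / g) * ln (2 * INR s) * (log2R (INR (fact n) / sqrt (INR s)) + 1).
Proof.
  set (L := Nat.log2 s).
  set (N := INR (fact n)).
  set (p := ln 2). set (lN := ln N). set (ls := ln (INR s)).
  assert (Hp : 0 < p) by apply ln2_pos.
  assert (HsR : 1 <= INR s) by (apply (le_INR 1); auto).
  assert (HsN : INR s <= N) by (apply le_INR; auto).
  assert (HN : 0 < N) by lra.
  assert (HL : (2 ^ L <= s)%nat) by (apply Nat.log2_spec; lia).
  assert (HlsN : ls <= lN) by (apply my_ln_le; lra).
  assert (HLs : INR L * p <= ls).
  { unfold ls, p. rewrite <- ln_pow by lra. apply my_ln_le. apply pow_lt; lra.
    rewrite <- (pow_INR 2). apply le_INR; auto. }
  assert (Hterm : forall i, (i <= L)%nat ->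
     T g (INR (s / 2 ^ i) / N) <= (2/g) * ((p + lN - p * INR L) + p * INR i)).
  { intros i Hi.
    set (k := (s / 2 ^ i)%nat).
    assert (Hk1 : (2 ^ (L - i) <= k)%nat).
    { unfold k. apply Nat.div_le_lower_bound. apply Nat.pow_nonzero; lia.
      rewrite <- Nat.pow_add_r. replace (i + (L - i))%nat with L by lia. auto. }
    assert (Hk2 : (k <= s)%nat).
    { unfold k. apply Nat.Div0.div_le_upper_bound.
      assert (1 <= 2 ^ i)%nat by (apply Nat.pow_le_mono_r with (a:=2%nat) (b:=0%nat); lia). nia. }
    assert (Hpow : 1 <= INR (2 ^ (L - i))) by (apply (le_INR 1); apply Nat.pow_le_mono_r with (a:=2%nat) (b:=0%nat); lia).
    assert (HkR : INR (2 ^ (L - i)) <= INR k) by (apply le_INR; auto).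
    assert (HkN : INR k <= N) by (apply le_INR; lia).
    assert (Hx : 0 < INR k / N <= 1).
    { split. apply Rdiv_lt_0_compat; lra. apply Rmult_le_reg_r with N; auto. field_simplify; lra. }
    destruct (cot_bound _ Hx) as [Hc1 Hc2].
    unfold T. apply Rmult_le_compat_l. left; apply Rdiv_lt_0_compat; lra.
    eapply Rle_trans. apply my_ln_le; eauto.
    replace (2 / (INR k / N)) with (2 * N * / INR k) by (field; lra).
    rewrite ln_mult, ln_mult, ln_Rinv; try lra.
    2: { apply Rinv_0_lt_compat; lra. }
    assert (ln (INR (2 ^ (L - i))) <= ln (INR k)) by (apply my_ln_le; lra).
    rewrite pow_INR, ln_pow, minus_INR in H by (simpl; lra || lia).
    change (INR 2) with 2 in H. fold p in H. unfold lN. unfold p in *. nra. }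
  eapply Rle_trans. apply sum_Rle. exact Hterm.
  rewrite sum_scal, sum_lin.
  assert (E1 : ln (2 * INR s) = p + ls) by (apply ln_mult; lra).
  assert (Hsq : 0 < sqrt (INR s)) by (apply sqrt_lt_R0; lra).
  assert (E2 : ln (sqrt (INR s)) = ls / 2).
  { assert (H : ln (sqrt (INR s) * sqrt (INR s)) = ln (sqrt (INR s)) + ln (sqrt (INR s))) by (apply ln_mult; lra).
    rewrite sqrt_sqrt in H by lra. fold ls in H. lra. }
  assert (E3 : log2R (N / sqrt (INR s)) = (lN - ls / 2) / p).
  { unfold log2R. replace (N / sqrt (INR s)) with (N * / sqrt (INR s)) by reflexivity.
    rewrite ln_mult, ln_Rinv, E2 by (try apply Rinv_0_lt_compat; lra). fold p lN. field; lra. }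
  rewrite E1, E3. rewrite (Rmult_assoc (2/g) (p+ls)). apply Rmult_le_compat_l. left; apply Rdiv_lt_0_compat; lra.
  set (m := INR L * p).
  apply Rmult_le_reg_r with p; auto.
  replace ((p + ls) * ((lN - ls / 2) / p + 1) * p) with ((p + ls) * (p + lN - ls/2)) by (field; lra).
  replace (((INR L + 1) * (p + lN - p * INR L) + p * INR L * (INR L + 1) / 2) * p)
    with ((m + p) * (p + lN - m/2)) by (unfold m; field).
  assert (0 <= (ls - m) * (p/2 + lN - (ls + m)/2)).
  { apply Rmult_le_pos; unfold m in *; lra. }
  nra.
Qed.
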